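(* For every graph $G$ the following are equivalent. (1) $G$ is a pseudo-cograph. (2) $G$ is a cograph, or there is a vertex $v\in V(G)$ such that (B1) $G-v$ or $\overline{G-v}$ is disconnected, with $\mathfrak C$ the set of connected components of that disconnected graph; (B2) $G[V(H)\cup\{v\}]$ is a cograph for every $H\in\mathfrak C$; and (B3) all edges of the graph $\Gamma(G,v)$ are incident to one common vertex. (3) $G$ is a cograph, or there is a vertex $v\in V(G)$ such that (C1) $G-v$ or $\overline{G-v}$ is disconnected, with $\mathfrak C$ the set of connected components of that disconnected graph; and (C2) there is at least one and at most two components $H\in\mathfrak C$ such that both $G[V(H)\cup\{v\}]$ and $G[V(G)\setminus V(H)]$ are cographs.
   Context: Graphs finite, simple, undirected; $G[W]$ induced subgraph; $G-v$ is $G$ with $v$ deleted; $\overline H$ complement; the join of vertex-disjoint graphs adds all edges between them to the disjoint union; a cograph is a graph without induced $P_4$. $G$ is a pseudo-cograph if $|V(G)|\le2$ or there are induced subgraphs $G_1,G_2$ and $v\in V(G)$ with (F1) $V(G)=V(G_1)\cup V(G_2)$, $V(G_1)\cap V(G_2)=\{v\}$, $|V(G_1)|,|V(G_2)|>1$; (F2) $G_1,G_2$ cographs; (F3) $G-v$ is the join or the disjoint union of $G_1-v$ and $G_2-v$. Given $v$ and $\mathfrak C$ as in (B1), $\Gamma(G,v)$ is the undirected graph with vertex set $\mathfrak C$ in which $\{H,H'\}$ is an edge iff the subgraph of $G$ induced by $V(H)\cup V(H')\cup\{v\}$ contains an induced $P_4$. *)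

(* Defs.v *)
(* A finite simple graph G is a finite vertex type T with a
   symmetric irreflexive adjacency relation e : rel T; V(G) = T. *)
From mathcomp Require Import all_boot.
Set Implicit Arguments. Unset Strict Implicit. Unset Printing Implicit Defensive.

Section Graphs.
Variable T : finType.

Definition has_induced_P4 (e : rel T) (W : {set T}) : bool :=
  [exists a : T, exists b : T, exists c : T, exists d : T,
    [&& a \in W, b \in W, c \in W, d \in W, uniq [:: a; b; c; d],
        e a b, e b c, e c d, ~~ e a c, ~~ e b d & ~~ e a d]].

Definition cographW (e : rel T) (W : {set T}) : bool := ~~ has_induced_P4 e W.

Definition cograph (e : rel T) : bool := cographW e setT.

Definition restrict (r : rel T) (W : {set T}) : rel T :=
  [rel x y | [&& x \in W, y \in W & r x y]].

Definition components (r : rel T) (W : {set T}) : {set {set T}} :=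
  [set [set y in W | connect (restrict r W) x y] | x in W].

Definition disconnected (r : rel T) (W : {set T}) : Prop :=
  1 < #|components r W|.

Definition compl (e : rel T) : rel T := [rel x y | (x != y) && ~~ e x y].

Definition pseudo_cograph (e : rel T) : Prop :=
  #|T| <= 2 \/
  exists (W1 W2 : {set T}) (v : T),
    [/\ W1 :|: W2 = setT, W1 :&: W2 = [set v], 1 < #|W1| & 1 < #|W2|] /\
    (cographW e W1 /\ cographW e W2) /\
    ((forall x y, x \in W1 :\ v -> y \in W2 :\ v -> e x y) \/
     (forall x y, x \in W1 :\ v -> y \in W2 :\ v -> ~~ e x y)).

(* Conditions (B1)-(B3) for vertex v, where r is the adjacency relation of the
   graph whose disconnectedness is asserted (r = e for G-v, r = compl e for the
   complement of G-v); both graphs live on V(G) \ {v} = [set~ v]. *)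
Definition condB (e : rel T) (v : T) (r : rel T) : Prop :=
  let C := components r [set~ v] in
  disconnected r [set~ v] /\
  (forall H, H \in C -> cographW e (H :|: [set v])) /\
  (* every edge {H,H'} of Gamma(G,v) is incident to H0 *)
  (exists2 H0, H0 \in C &
     forall H H', H \in C -> H' \in C -> H != H' ->
       has_induced_P4 e (H :|: H' :|: [set v]) -> H0 = H \/ H0 = H').

Definition condC (e : rel T) (v : T) (r : rel T) : Prop :=
  let C := components r [set~ v] in
  disconnected r [set~ v] /\
  let good := [set H in C | cographW e (H :|: [set v]) && cographW e (~: H)] in
  1 <= #|good| <= 2.

End Graphs.

(* Main.v *)
Require Import Defs.
From mathcomp Require Import all_boot.
Set Implicit Arguments. Unset Strict Implicit. Unset Printing Implicit Defensive.


Definition gcomp {T : finType} (r : rel T) (W : {set T}) (x : T) : {set T} :=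
  [set y in W | connect (restrict r W) x y].

Lemma restrict_sym {T : finType} (r : rel T) (W : {set T}) : symmetric r -> symmetric (restrict r W).
Proof. move=> rs x y; rewrite /restrict /= rs; by case: (x \in W); case: (y \in W). Qed.

Lemma conn_sym {T : finType} (r : rel T) (W : {set T}) x y : symmetric r ->
  connect (restrict r W) x y = connect (restrict r W) y x.
Proof. move=> rs; exact: (sym_connect_sym (restrict_sym W rs)). Qed.

Lemma conn_W {T : finType} (r : rel T) (W : {set T}) x y :
  x \in W -> connect (restrict r W) x y -> y \in W.
Proof.
move=> xW c.
have cl : closed (restrict r W) W.
  by move=> a b /and3P[aW bW _]; apply/idP/idP.
by rewrite -(closed_connect cl c).
Qed.

Lemma comp_self {T : finType} (r : rel T) (W : {set T}) x : x \in W -> x \in gcomp r W x.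
Proof. by move=> xW; rewrite inE xW connect0. Qed.

Lemma comp_eq {T : finType} (r : rel T) (W : {set T}) x y : symmetric r ->
  connect (restrict r W) x y -> gcomp r W x = gcomp r W y.
Proof.
move=> rs cxy; apply/setP=> z; rewrite !inE; case: (z \in W) => //=.
apply/idP/idP => h.
  by apply: connect_trans h; rewrite conn_sym.
by apply: connect_trans cxy h.
Qed.

Lemma inC_eq {T : finType} (r : rel T) (W : {set T}) H u : symmetric r ->
  H \in components r W -> u \in H -> H = gcomp r W u.
Proof.
move=> rs /imsetP[x xW ->] uH; apply: comp_eq => //.
by move: uH; rewrite inE => /andP[].
Qed.

Lemma comp_in {T : finType} (r : rel T) (W : {set T}) x : x \in W -> gcomp r W x \in components r W.
Proof. by move=> xW; apply: imset_f. Qed.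

Lemma disc_iff {T : finType} (r : rel T) (W : {set T}) : symmetric r ->
  disconnected r W <->
  exists x y, [/\ x \in W, y \in W & ~~ connect (restrict r W) x y].
Proof.
move=> rs; split.
  move/card_gt1P=> [H1 [H2 [/imsetP[x xW ->] /imsetP[y yW ->] ne]]].
  exists x, y; split=> //; apply/negP=> c; have := comp_eq rs c; rewrite /gcomp => E; by rewrite E eqxx in ne.
move=> [x [y [xW yW nc]]]; apply/card_gt1P; exists (gcomp r W x), (gcomp r W y).
split; try exact: comp_in.
apply/negP=> /eqP E; have := comp_self r yW; rewrite -E inE => /andP[_ c].
by rewrite c in nc.
Qed.

Lemma disc_ext {T : finType} (r r' : rel T) (W : {set T}) : r =2 r' ->
  disconnected r W -> disconnected r' W.
Proof.
move=> E; rewrite /disconnected /components.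
suff -> : [set [set y in W | connect (restrict r W) x y] | x in W] =
          [set [set y in W | connect (restrict r' W) x y] | x in W] by [].
apply: eq_imset => x; apply/setP=> y; rewrite !inE; congr (_ && _).
by apply: eq_connect=> a b; rewrite /restrict /= E.
Qed.


Definition P4at {T : finType} (g : rel T) (W : {set T}) (a b c d : T) : bool :=
  [&& a \in W, b \in W, c \in W, d \in W, uniq [:: a; b; c; d],
        g a b, g b c, g c d, ~~ g a c, ~~ g b d & ~~ g a d].

Lemma P4P {T : finType} (g : rel T) (W : {set T}) :
  reflect (exists a b c d, P4at g W a b c d) (has_induced_P4 g W).
Proof.
apply: (iffP idP).
  by case/existsP=> a /existsP[b /existsP[c /existsP[d H]]]; exists a, b, c, d.
case=> a [b [c [d H]]]; apply/existsP; exists a; apply/existsP; exists b;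
  apply/existsP; exists c; apply/existsP; exists d; exact H.
Qed.

Lemma P4_mono {T : finType} (g : rel T) (W W' : {set T}) :
  W \subset W' -> has_induced_P4 g W -> has_induced_P4 g W'.
Proof.
move=> /subsetP s /P4P[a [b [c [d H]]]]; apply/P4P; exists a, b, c, d.
move: H => /and5P[aW bW cW dW /and5P[u e1 e2 e3 /and3P[n1 n2 n3]]].
rewrite /P4at !s //= e1 e2 e3 n1 n2 n3 !andbT. by move: u; rewrite /= andbT.
Qed.

Lemma cog_mono {T : finType} (g : rel T) (W W' : {set T}) :
  W \subset W' -> cographW g W' -> cographW g W.
Proof. by move=> s; apply: contra; apply: P4_mono. Qed.

Lemma P4_compl1 {T : finType} (g : rel T) (W : {set T}) : symmetric g ->
  has_induced_P4 g W -> has_induced_P4 (compl g) W.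
Proof.
move=> gs /P4P[a [b [c [d H]]]]; apply/P4P; exists b, d, a, c.
move: H => /and5P[aW bW cW dW /and5P[u e1 e2 e3 /and3P[n1 n2 n3]]].
move: u; rewrite /= !inE !negb_or => /and4P[/and3P[ab ac ad] /andP[bc bd] cd _].
rewrite /P4at /= aW bW cW dW !inE /compl /=.
rewrite (gs b a) (gs d c) (gs d a) e1 e3 e2 n1 n2 n3 /=.
rewrite (eq_sym b a) (eq_sym d a) (eq_sym d c) ab bd ad cd ac bc /=.
by rewrite !negb_or bd ab bc ad cd. Qed.

Lemma compl_compl {T : finType} (g : rel T) : irreflexive g -> compl (compl g) =2 g.
Proof.
move=> gi x y; rewrite /compl /=; case: eqVneq => [->|]; first by rewrite gi.
by rewrite negbK.
Qed.

Lemma compl_sym {T : finType} (g : rel T) : symmetric g -> symmetric (compl g).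
Proof. by move=> gs x y; rewrite /compl /= eq_sym gs. Qed.

Lemma compl_irr {T : finType} (g : rel T) : irreflexive (compl g).
Proof. by move=> x; rewrite /compl /= eqxx. Qed.

Lemma P4_ext {T : finType} (g g' : rel T) (W : {set T}) : g =2 g' ->
  has_induced_P4 g W -> has_induced_P4 g' W.
Proof.
move=> E /P4P[a [b [c [d H]]]]; apply/P4P; exists a, b, c, d.
by move: H; rewrite /P4at !E.
Qed.

Lemma P4_compl {T : finType} (g : rel T) (W : {set T}) : symmetric g -> irreflexive g ->
  has_induced_P4 (compl g) W = has_induced_P4 g W.
Proof.
move=> gs gi; apply/idP/idP; last exact: P4_compl1.
move/(P4_compl1 (compl_sym gs)); exact: P4_ext (compl_compl gi).
Qed.


Lemma edge_conn {T : finType} (g : rel T) (W0 : {set T}) x y :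
  x \in W0 -> y \in W0 -> g x y -> connect (restrict g W0) x y.
Proof. by move=> xW yW gxy; apply: connect1; rewrite /restrict /= xW yW. Qed.

Lemma mkP4 {T : finType} (g : rel T) (W0 W : {set T}) (v a c d : T) :
  symmetric g -> irreflexive g ->
  v \notin W0 -> a \in W0 -> c \in W0 -> d \in W0 ->
  a \in W -> v \in W -> c \in W -> d \in W ->
  g v a -> g v c -> g c d -> ~~ g v d -> ~~ connect (restrict g W0) a c ->
  has_induced_P4 g W.
Proof.
move=> gs gi vW0 aW0 cW0 dW0 aW vW cW dW va vc cd vd nac.
apply/P4P; exists a, v, c, d.
have gac : ~~ g a c by apply: contra nac; apply: edge_conn.
have gad : ~~ g a d.
  apply: contra nac => gad; apply: connect_trans (edge_conn aW0 dW0 gad) _.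
  by apply: edge_conn; rewrite // gs.
have nac' : a != c by apply: contra nac => /eqP->; apply: connect0.
have nad : a != d.
  apply: contra nac => /eqP->; by apply: edge_conn; rewrite // gs.
have nav : a != v by apply: contraNneq vW0 => <-.
have ncv : v != c by apply: contraNneq vW0 => ->.
have ndv : v != d by apply: contraNneq vW0 => ->.
have ncd : c != d by apply: contraTneq cd => ->; rewrite gi.
rewrite /P4at aW vW cW dW /= !inE !negb_or nav nac' nad ncv ndv ncd /=.
by rewrite (gs a v) va vc cd gac vd gad.
Qed.

Definition case2 {T : finType} (g : rel T) (W : {set T}) (v a c d : T) : Prop :=
  [/\ [/\ a \in W, c \in W & d \in W],
      [/\ a \in [set~ v], c \in [set~ v] & d \in [set~ v]], g v a, g v c &
      [/\ g c d, ~~ g v d & ~~ connect (restrict g [set~ v]) a c]].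

Lemma P4_inside {T : finType} (g : rel T) (W : {set T}) (v a b c d x : T) :
  P4at g W a b c d -> x \in [set~ v] ->
  (forall y, y \in [:: a; b; c; d] -> (y == v) || connect (restrict g [set~ v]) x y) ->
  has_induced_P4 g (gcomp g [set~ v] x :|: [set v]).
Proof.
move=> H xW0 hy; apply/P4P; exists a, b, c, d.
have mem : forall y, y \in [:: a; b; c; d] -> y \in gcomp g [set~ v] x :|: [set v].
  move=> y /hy; rewrite !inE; case: eqVneq => //= yv c'.
  by rewrite c'.
move: H; rewrite /P4at => /and5P[_ _ _ _ rest].
by rewrite !mem ?inE ?eqxx ?orbT.
Qed.

Lemma P4at_rev {T : finType} (g : rel T) (W : {set T}) (a b c d : T) :
  symmetric g -> P4at g W a b c d -> P4at g W d c b a.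
Proof.
move=> gs.
rewrite /P4at => /and5P[aW bW cW dW /and5P[u e1 e2 e3 /and3P[n1 n2 n3]]].
move: u; rewrite /= !inE !negb_or => /and4P[/and3P[ab ac ad] /andP[bc bd] cd _].
rewrite aW bW cW dW /= (eq_sym d c) (eq_sym d b) (eq_sym d a)
  (eq_sym c b) (eq_sym c a) (eq_sym b a) cd bd ad bc ac ab /=.
by rewrite (gs d c) (gs c b) (gs b a) e1 e2 e3 (gs d b) n2 (gs c a) n1 (gs d a) n3.
Qed.

Lemma P4_key {T : finType} (g : rel T) (W : {set T}) (v a b c d : T) :
  symmetric g -> P4at g W a b c d -> b = v ->
  (exists2 x, x \in [set~ v] & has_induced_P4 g (gcomp g [set~ v] x :|: [set v])) \/
  (exists a c d, case2 g W v a c d).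
Proof.
move=> gs H bv; move: (H).
rewrite /P4at => /and5P[aW bW cW dW /and5P[u e1 e2 e3 /and3P[n1 n2 n3]]].
move: u; rewrite /= !inE !negb_or => /and4P[/and3P[ab ac ad] /andP[bc bd] cd _].
subst b.
have aW0 : a \in [set~ v] by rewrite !inE.
have cW0 : c \in [set~ v] by rewrite !inE eq_sym.
have dW0 : d \in [set~ v] by rewrite !inE eq_sym.
have ccd : connect (restrict g [set~ v]) c d by apply: edge_conn.
case: (boolP (connect (restrict g [set~ v]) a c)) => cac.
  left; exists a => //; apply: P4_inside H aW0 _.
  move=> y; rewrite !inE => /or4P[] /eqP->; rewrite ?eqxx ?connect0 ?cac ?orbT //.
  by rewrite (connect_trans cac ccd) orbT.
right; exists a, c, d; split=> //; by rewrite gs.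
Qed.

Lemma P4_local {T : finType} (g : rel T) (W : {set T}) (v : T) :
  symmetric g -> has_induced_P4 g W ->
  (exists2 x, x \in [set~ v] & has_induced_P4 g (gcomp g [set~ v] x :|: [set v])) \/
  (exists a c d, case2 g W v a c d).
Proof.
move=> gs /P4P[a [b [c [d H]]]].
case: (eqVneq b v) => [bv|bv]; first exact: P4_key H bv.
case: (eqVneq c v) => [cv|cv]; first exact: P4_key (P4at_rev gs H) cv.
move: (H); rewrite /P4at => /and5P[aW bW cW dW /and5P[u e1 e2 e3 /and3P[n1 n2 n3]]].
have bW0 : b \in [set~ v] by rewrite !inE.
have cW0 : c \in [set~ v] by rewrite !inE.
have cbc : connect (restrict g [set~ v]) b c by apply: edge_conn.
left; case: (eqVneq a v) => [av|av].
  exists b => //; apply: P4_inside H bW0 _.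
  move=> y; rewrite !inE => /or4P[] /eqP->; rewrite ?av ?eqxx ?connect0 ?cbc ?orbT //.
  case: (eqVneq d v) => //= dv; apply: connect_trans cbc _; apply: edge_conn => //.
  by rewrite !inE.
have aW0 : a \in [set~ v] by rewrite !inE.
have cab : connect (restrict g [set~ v]) a b by apply: edge_conn.
exists a => //; apply: P4_inside H aW0 _.
move=> y; rewrite !inE => /or4P[] /eqP->; rewrite ?connect0 ?cab ?orbT //.
  by rewrite (connect_trans cab cbc) orbT.
case: (eqVneq d v) => //= dv; apply: connect_trans (connect_trans cab cbc) _.
by apply: edge_conn => //; rewrite !inE.
Qed.


Definition Dec {T : finType} (g : rel T) (v : T) (W1 W2 : {set T}) : Prop :=
  [/\ W1 :|: W2 = setT, W1 :&: W2 = [set v], 1 < #|W1| & 1 < #|W2|] /\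
  (cographW g W1 /\ cographW g W2) /\
  (forall x y, x \in W1 :\ v -> y \in W2 :\ v -> ~~ g x y).

Lemma C_sub {T : finType} (r : rel T) (W H : {set T}) :
  H \in components r W -> H \subset W.
Proof. by case/imsetP=> x _ ->; apply/subsetP=> y; rewrite inE => /andP[]. Qed.

Lemma C_ne {T : finType} (r : rel T) (W H : {set T}) :
  H \in components r W -> exists x, x \in H.
Proof. by case/imsetP=> x xW ->; exists x; apply: comp_self. Qed.

Lemma C_disj {T : finType} (r : rel T) (W H H' : {set T}) z : symmetric r ->
  H \in components r W -> H' \in components r W -> z \in H -> z \in H' -> H = H'.
Proof. by move=> rs HC H'C zH zH'; rewrite (inC_eq rs HC zH) (inC_eq rs H'C zH'). Qed.

Lemma case2_edge {T : finType} (g : rel T) (W : {set T}) (v a c d : T) :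
  symmetric g -> irreflexive g -> case2 g W v a c d ->
  [/\ gcomp g [set~ v] a != gcomp g [set~ v] c,
      has_induced_P4 g (gcomp g [set~ v] a :|: gcomp g [set~ v] c :|: [set v]),
      a \in gcomp g [set~ v] a & c \in gcomp g [set~ v] c].
Proof.
move=> gs gi [[aW cW dW] [aW0 cW0 dW0] va vc [cd vd nac]].
have aa := comp_self g aW0; have cc := comp_self g cW0.
split=> //.
  apply: contra nac => /eqP E; move: cc; rewrite -E inE => /andP[_ ->] //.
apply: (mkP4 gs gi (W0 := [set~ v])) (va) (vc) (cd) (vd) nac => //.
- by rewrite !inE eqxx.
- by rewrite !in_setU aa.
- by rewrite !in_setU set11 orbT.
- by rewrite !in_setU cc orbT.
- have dc : d \in gcomp g [set~ v] c by rewrite inE dW0 edge_conn.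
  by rewrite !in_setU dc orbT.
Qed.

Lemma notv_C {T : finType} (g : rel T) (v : T) H :
  H \in components g [set~ v] -> v \notin H.
Proof. by move=> /C_sub /subsetP s; apply/negP=> /s; rewrite !inE eqxx. Qed.

Lemma build {T : finType} (g : rel T) (v : T) H0 :
  symmetric g -> H0 \in components g [set~ v] -> disconnected g [set~ v] ->
  cographW g (H0 :|: [set v]) -> cographW g (~: H0) ->
  Dec g v (H0 :|: [set v]) (~: H0).
Proof.
move=> gs HC dis c1 c2; have vH := notv_C HC.
have [h hH] := C_ne HC.
have HE := inC_eq gs HC hH.
have hW0 : h \in [set~ v] by move/C_sub/subsetP: HC; apply.
split; last split => //.
  split.
  - by apply/setP=> z; rewrite !inE; case: (z \in H0); rewrite ?orbT.
  - apply/setP=> z; rewrite !inE; case: eqVneq => [->|] /=; first by rewrite (negbTE vH).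
    by rewrite orbF; case: (z \in H0).
  - apply/card_gt1P; exists h, v; rewrite !inE hH eqxx orbT; split=> //.
    by move: hW0; rewrite !inE.
  - move/(disc_iff _ gs): dis => [x [y [xW yW nxy]]].
    have [w [wW wH]] : exists w, w \in [set~ v] /\ w \notin H0.
      case: (boolP (x \in H0)) => xH; last by exists x.
      case: (boolP (y \in H0)) => yH; last by exists y.
      move: xH yH; rewrite HE !inE => /andP[_ cx] /andP[_ cy].
      by move: nxy; rewrite (connect_trans _ cy) // conn_sym.
    apply/card_gt1P; exists w, v; rewrite !inE wH vH; split=> //.
    by move: wW; rewrite !inE.
move=> x y; rewrite !inE => /andP[xv xH] /andP[yv yH]; apply/negP=> gxy.
rewrite (negbTE xv) orbF in xH.
have yW0 : y \in [set~ v] by rewrite !inE.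
have xW0 : x \in [set~ v] by rewrite !inE.
move: yH; rewrite HE inE yW0 /=; apply/negP/negPn.
move: xH; rewrite HE inE => /andP[_ hx].
exact: connect_trans hx (edge_conn xW0 yW0 gxy).
Qed.

Lemma center_cog {T : finType} (g : rel T) (v : T) H0 :
  symmetric g -> irreflexive g ->
  (forall H, H \in components g [set~ v] -> cographW g (H :|: [set v])) ->
  (forall H H', H \in components g [set~ v] -> H' \in components g [set~ v] -> H != H' ->
       has_induced_P4 g (H :|: H' :|: [set v]) -> H0 = H \/ H0 = H') ->
  cographW g (~: H0).
Proof.
move=> gs gi allc cen; apply/negP => /(P4_local v gs) [[x xW0 P]|[a [c [d cs]]]].
  by move: (allc _ (comp_in g xW0)); rewrite /cographW P.
have [ne P aa cc] := case2_edge gs gi cs.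
case: cs => [[aH cH _] [aW0 cW0 _] _ _ _].
have [E|E] := cen _ _ (comp_in g aW0) (comp_in g cW0) ne P.
  by move: aH; rewrite E inE aa.
by move: cH; rewrite E inE cc.
Qed.

Lemma cog_center {T : finType} (g : rel T) (v : T) H0 :
  symmetric g -> H0 \in components g [set~ v] -> cographW g (~: H0) ->
  forall H H', H \in components g [set~ v] -> H' \in components g [set~ v] -> H != H' ->
       has_induced_P4 g (H :|: H' :|: [set v]) -> H0 = H \/ H0 = H'.
Proof.
move=> gs H0C cg H H' HC H'C ne P.
case: (eqVneq H0 H) => [|n1]; first by left.
case: (eqVneq H0 H') => [|n2]; first by right.
have sub : H :|: H' :|: [set v] \subset ~: H0.
  apply/subsetP=> z; rewrite !inE => /orP[/orP[zH|zH]|/eqP->].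
  - apply/negP=> zH0; by rewrite (C_disj gs H0C HC zH0 zH) eqxx in n1.
  - apply/negP=> zH0; by rewrite (C_disj gs H0C H'C zH0 zH) eqxx in n2.
  - exact: notv_C H0C.
by move: cg; rewrite /cographW (P4_mono sub P).
Qed.


Lemma G2 {T : finType} (g : rel T) (v : T) :
  symmetric g -> irreflexive g -> condB g v g -> exists W1 W2, Dec g v W1 W2.
Proof.
move=> gs gi [dis [allc [H0 H0C cen]]].
exists (H0 :|: [set v]), (~: H0); apply: build => //; first exact: allc.
exact: (center_cog gs gi allc cen).
Qed.

Lemma G3 {T : finType} (g : rel T) (v : T) :
  symmetric g -> condC g v g -> exists W1 W2, Dec g v W1 W2.
Proof.
move=> gs [dis] /andP[/card_gt0P [H0]]; rewrite inE => /and3P[H0C c1 c2] _.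
exists (H0 :|: [set v]), (~: H0); exact: build.
Qed.

Lemma G4 {T : finType} (g : rel T) (v : T) :
  symmetric g -> irreflexive g -> condB g v g -> cographW g setT \/ condC g v g.
Proof.
move=> gs gi [dis [allc [H0 H0C cen]]].
case: (boolP (cographW g setT)) => [|ncog]; [by left|right].
split=> //; apply/andP; split.
  apply/card_gt0P; exists H0; rewrite inE H0C allc //=.
  exact: (center_cog gs gi allc cen).
move: ncog; rewrite /cographW negbK => /(P4_local v gs) [[x xW0 P]|[a [c [d cs]]]].
  by move: (allc _ (comp_in g xW0)); rewrite /cographW P.
have [ne P aa cc] := case2_edge gs gi cs.
case: cs => [_ [aW0 cW0 _] _ _ _].
apply: (@leq_trans #|[set gcomp g [set~ v] a; gcomp g [set~ v] c]|); last first.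
  by rewrite cards2; case: (_ != _).
apply: subset_leq_card; apply/subsetP=> H; rewrite inE => /and3P[HC _ cg].
have [<-|<-] := cog_center gs HC cg (comp_in g aW0) (comp_in g cW0) ne P.
  by rewrite !inE eqxx.
by rewrite !inE eqxx orbT.
Qed.


Definition sideS {T : finType} (W1 W2 : {set T}) (u : T) := if u \in W1 then W1 else W2.

Lemma ex_notv {T : finType} (W : {set T}) (v : T) :
  1 < #|W| -> exists2 x, x \in W & x != v.
Proof.
case/card_gt1P=> [x [y [xW yW ne]]].
case: (eqVneq x v) => [xv|xv]; last by exists x.
by exists y => //; rewrite -xv eq_sym.
Qed.

Lemma G1 {T : finType} (g : rel T) (v : T) (W1 W2 : {set T}) :
  symmetric g -> irreflexive g -> Dec g v W1 W2 -> condB g v g.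
Proof.
move=> gs gi [[U I c1 c2] [[cg1 cg2] noe]].
have vW1 : v \in W1 by move/setP: I => /(_ v); rewrite !inE eqxx => /andP[].
have vW2 : v \in W2 by move/setP: I => /(_ v); rewrite !inE eqxx => /andP[].
have inU : forall z, z \notin W1 -> z \in W2.
  by move=> z zn; move/setP: U => /(_ z); rewrite !inE (negbTE zn) /= => ->.
have both : forall z, z \in W1 -> z \in W2 -> z = v.
  by move=> z z1 z2; move/setP: I => /(_ z); rewrite !inE z1 z2 => /esym/eqP.
have cl : closed (restrict g [set~ v]) W1.
  move=> x y /and3P[xW yW gxy]; move: xW yW; rewrite !inE => xv yv.
  case: (boolP (x \in W1)) => x1; case: (boolP (y \in W1)) => y1 //.
    by move: (noe x y); rewrite !inE xv yv x1 inU //= => /(_ isT isT); rewrite gxy.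
  by move: (noe y x); rewrite !inE xv yv y1 inU //= => /(_ isT isT); rewrite gs gxy.
have side : forall x y, connect (restrict g [set~ v]) x y -> (x \in W1) = (y \in W1).
  by move=> x y; apply: closed_connect.
have compS : forall u, u \in [set~ v] -> gcomp g [set~ v] u :|: [set v] \subset sideS W1 W2 u.
  move=> u uW0; apply/subsetP=> z; rewrite !inE => /orP[/andP[zv cz]|/eqP->].
    rewrite /sideS; have := side _ _ cz; case: (u \in W1) => [<-//|zn].
    by apply: inU; rewrite -zn.
  by rewrite /sideS; case: (u \in W1).
have cogS : forall u, cographW g (sideS W1 W2 u).
  by move=> u; rewrite /sideS; case: (u \in W1).
have allc : forall H, H \in components g [set~ v] -> cographW g (H :|: [set v]).
  by move=> H /imsetP[u uW0 ->]; apply: cog_mono (compS _ uW0) (cogS u).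
have helper : forall p q r, p \in [set~ v] -> q \in [set~ v] -> r \in [set~ v] ->
    g v p -> g v q -> g q r -> ~~ g v r -> ~~ connect (restrict g [set~ v]) p q ->
    (p \in W1) = (q \in W1) -> False.
  move=> p q r pW0 qW0 rW0 vp vq qr vr npq epq.
  have Sq : sideS W1 W2 q = sideS W1 W2 p by rewrite /sideS epq.
  have sp := subsetP (compS _ pW0); have sq := subsetP (compS _ qW0).
  rewrite Sq in sq.
  move: (cogS p); rewrite /cographW => /negP; apply.
  apply: (mkP4 gs gi (W0 := [set~ v])) (vp) (vq) (qr) (vr) (npq) => //.
  - by rewrite !inE eqxx.
  - by apply: sp; rewrite in_setU comp_self.
  - by apply: sp; rewrite !inE eqxx orbT.
  - by apply: sq; rewrite in_setU comp_self.
  - by apply: sq; rewrite in_setU [r \in gcomp _ _ _]inE; apply/orP; left; apply/andP; split=> //; exact: edge_conn.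
have [x x1 xv] := ex_notv v c1.
have [y y2 yv] := ex_notv v c2.
have xW0 : x \in [set~ v] by rewrite !inE.
have yW0 : y \in [set~ v] by rewrite !inE.
split.
  apply/(disc_iff _ gs); exists x, y; split=> //; apply/negP=> cxy.
  have := side _ _ cxy; rewrite x1 => /esym y1.
  by move: yv; rewrite (both _ y1 y2) eqxx.
split; first exact: allc.
case: (boolP [exists x0, exists y0, [&& x0 \in [set~ v], y0 \in [set~ v], g x0 y0,
                                    g v x0 & ~~ g v y0]]) => [/existsP[x0 /existsP[y0]]|nopart].
  move=> /and5P[x0W0 y0W0 xy0 vx0 vy0].
  exists (gcomp g [set~ v] x0); first exact: comp_in.
  move=> H H' HC H'C ne P.
  have ncx : forall z, z \in H :|: H' :|: [set v] -> z \in [set~ v] ->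
      gcomp g [set~ v] x0 = H \/ gcomp g [set~ v] x0 = H' \/
      ~~ connect (restrict g [set~ v]) z x0.
    move=> z; rewrite !inE => /orP[/orP[zH|zH]|/eqP->]; last by rewrite eqxx.
      move=> _; case: (boolP (connect _ z x0)) => cz; last by right; right.
      by left; rewrite (inC_eq gs HC zH) (comp_eq gs cz).
    move=> _; case: (boolP (connect _ z x0)) => cz; last by right; right.
    by right; left; rewrite (inC_eq gs H'C zH) (comp_eq gs cz).
  case: (P4_local v gs P) => [[z zW0 Pz]|[a [c [d [[aW cW dW] [aW0 cW0 dW0] va vc [cd vd nac]]]]]].
    by move: (allc _ (comp_in g zW0)); rewrite /cographW Pz.
  have [E|[E|nax]] := ncx a aW aW0; [by left|by right|].
  have [E|[E|ncx0]] := ncx c cW cW0; [by left|by right|].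
  exfalso.
  case: (eqVneq (a \in W1) (c \in W1)) => [eac|nac1].
    exact: (helper a c d).
  case: (eqVneq (a \in W1) (x0 \in W1)) => [eax|nax1].
    exact: (helper a x0 y0).
  apply: (helper c x0 y0) => //.
  by move: nac1 nax1; case: (a \in W1); case: (c \in W1); case: (x0 \in W1).
exists (gcomp g [set~ v] x); first exact: comp_in.
move=> H H' HC H'C ne P.
case: (P4_local v gs P) => [[z zW0 Pz]|[a [c [d [[aW cW dW] [aW0 cW0 dW0] va vc [cd vd nac]]]]]].
  by move: (allc _ (comp_in g zW0)); rewrite /cographW Pz.
move/existsP: nopart; case; exists c; apply/existsP; exists d.
by rewrite cW0 dW0 cd vc vd.
Qed.


Lemma path_switch {T : finType} (r : rel T) (P : pred T) y x :
  connect r y x -> P y -> ~~ P x ->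
  exists c d, [/\ connect r y c, r c d, P c & ~~ P d].
Proof.
move/connectP=> [p pth ->]; elim: p y pth => [|z p IH] y /=.
  by move=> _ Py /negP.
move=> /andP[ryz pth] Py nP; case: (boolP (P z)) => Pz.
  have [c [d [cc rcd Pc nPd]]] := IH z pth Pz nP.
  by exists c, d; split=> //; apply: connect_trans (connect1 ryz) cc.
by exists y, z; split=> //; apply: connect0.
Qed.

Lemma step {T : finType} (g : rel T) (W : {set T}) (v : T) :
  symmetric g -> irreflexive g -> v \in W -> cographW g W ->
  disconnected g (W :\ v) \/ #|W :\ v| = 1 ->
  disconnected g W \/ disconnected (compl g) W.
Proof.
move=> gs gi vW cg hyp.
have W'W : W :\ v \subset W by apply: subD1set.
have vW' : v \notin W :\ v by rewrite !inE eqxx.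
have [u0 u0W'] : exists u, u \in W :\ v.
  case: hyp => [/(disc_iff _ gs) [x [y [xW _ _]]]|/eqP/cards1P [s ->]];
    by [exists x | exists s; rewrite inE].
case: (boolP [exists u in W :\ v, [forall y in W :\ v,
          connect (restrict g (W :\ v)) u y ==> ~~ g v y]]) => [/existsP[u /andP[uW' /forallP hu]]|nA].
  left; apply/(disc_iff _ gs); exists u, v; split=> //; first by move/subsetP: W'W; apply.
  set K := gcomp g (W :\ v) u.
  have fwd : forall a b, restrict g W a b -> a \in K -> b \in K.
    move=> a b /and3P[aW bW gab]; rewrite /K /gcomp in_set => /andP[aW' cua].
    have bv : b != v.
      apply: contraTneq gab => ->; rewrite gs.
      by move: (hu a); rewrite aW' cua.
    have bW' : b \in W :\ v by rewrite !inE bv.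
    by rewrite /K /gcomp in_set bW' (connect_trans cua) // edge_conn.
  have cl : closed (restrict g W) K.
    move=> a b e; apply/idP/idP; first exact: fwd.
    by apply: fwd; rewrite restrict_sym.
  apply/negP=> cuv; have := closed_connect cl cuv.
  by rewrite comp_self // inE (negbTE vW').
have hB : forall u, u \in W :\ v -> exists2 y, y \in W :\ v &
            connect (restrict g (W :\ v)) u y && g v y.
  move=> u uW'; move/existsPn: nA => /(_ u); rewrite uW' /= => /forallPn [y].
  by rewrite /= negb_imply negb_imply negbK => /andP[yW' /andP[h1 h2]]; exists y; rewrite ?h1.
case: (boolP [exists x in W :\ v, ~~ g v x]) => [/existsP[x /andP[xW' nvx]]|nB].
  have [y yW' /andP[cxy vy]] := hB x xW'.
  have cyx : connect (restrict g (W :\ v)) y x by rewrite conn_sym.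
  have [c [d [cyc Rcd vc nvd]]] := path_switch (P := g v) cyx vy nvx.
  move: (Rcd) => /and3P[cW' dW' cd].
  have cxc := connect_trans cxy cyc.
  have [w wW' nxw] : exists2 w, w \in W :\ v & ~~ connect (restrict g (W :\ v)) x w.
    case: hyp => [/(disc_iff _ gs) [p [q [pW qW npq]]]|/eqP/cards1P [s Es]].
      case: (boolP (connect (restrict g (W :\ v)) x p)) => cxp; last by exists p.
      exists q => //; apply: contra npq => cxq.
      by apply: connect_trans cxq; rewrite conn_sym.
    move: xW' yW' nvx vy; rewrite Es !inE => /eqP-> /eqP->. by move=> /negP.
  have [z zW' /andP[cwz vz]] := hB w wW'.
  have nzc : ~~ connect (restrict g (W :\ v)) z c.
    apply: contra nxw => czc.
    rewrite conn_sym //; apply: connect_trans (connect_trans cwz czc) _.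
    by rewrite conn_sym.
  move: cg; rewrite /cographW => /negP; case.
  have sW := subsetP W'W.
  exact: (mkP4 gs gi vW' zW' cW' dW' (sW _ zW') vW (sW _ cW') (sW _ dW') vz vc cd nvd nzc).
right; apply/(disc_iff _ (compl_sym gs)); exists v, u0; split=> //.
  by move/subsetP: W'W; apply.
have allv : forall x, x \in W :\ v -> g v x.
  by move=> x xW'; apply: contraR nB => nvx; apply/existsP; exists x; rewrite xW'.
have nv : forall a b, a \in W -> b \in W -> a != b -> ~~ g a b -> a != v.
  move=> a b aW bW ab ngab; apply/negP=> /eqP av; subst a.
  by move: ngab; rewrite allv // !inE eq_sym ab.
have cl : closed (restrict (compl g) W) [set v].
  move=> a b /and3P[aW bW]; rewrite /compl /= => /andP[ab ngab].
  have av := nv a b aW bW ab ngab.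
  have bv : b != v by apply: (nv b a bW aW); rewrite 1?eq_sym // gs.
  by rewrite !inE (negbTE av) (negbTE bv).
apply/negP=> cvu; have := closed_connect cl cvu.
rewrite !inE eqxx => /esym/eqP uv.
by move: u0W'; rewrite uv !inE eqxx.
Qed.

Lemma seinsche {T : finType} n : forall (g : rel T) (W : {set T}),
  symmetric g -> irreflexive g -> #|W| <= n -> 1 < #|W| -> cographW g W ->
  disconnected g W \/ disconnected (compl g) W.
Proof.
elim: n => [|n IH] g W gs gi Wn W1 cg; first by move: (leq_trans W1 Wn).
have [v vW] : exists v, v \in W by apply/card_gt0P; apply: ltnW.
have cW := cardsD1 v W; rewrite vW /= in cW.
have hyp : disconnected g (W :\ v) \/ disconnected (compl g) (W :\ v) \/ #|W :\ v| = 1.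
  case: (eqVneq #|W :\ v| 1) => [|n1]; first by right; right.
  have c2 : 1 < #|W :\ v|.
    by move: W1 n1; rewrite cW; case: #|W :\ v| => [|[|k]].
  have c3 : #|W :\ v| <= n by move: Wn; rewrite cW.
  have [h|h] := IH g (W :\ v) gs gi c3 c2 (cog_mono (subD1set W v) cg).
  - by left.
  - by right; left.
case: hyp => [h|[h|h]].
- exact: step gs gi vW cg (or_introl h).
2: exact: step gs gi vW cg (or_intror h).
have := step (compl_sym gs) (@compl_irr _ g) vW _ (or_introl h).
rewrite /cographW P4_compl // => /(_ cg) [d|d]; first by right.
by left; apply: disc_ext d; apply: compl_compl.
Qed.


Lemma small_cog {T : finType} (e : rel T) : #|T| <= 2 -> cograph e.
Proof.
move=> T2; apply/negP=> /P4P[a [b [c [d /and5P[_ _ _ _ /and5P[u _ _ _ _]]]]]].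
have := max_card (mem [:: a; b; c; d]); rewrite (card_uniqP u) /= => h.
by move: (leq_trans h T2).
Qed.

Lemma inter_neq {T : finType} (W1 W2 : {set T}) v x y :
  W1 :&: W2 = [set v] -> x \in W1 :\ v -> y \in W2 :\ v -> x != y.
Proof.
move=> I; rewrite !inE => /andP[xv x1] /andP[yv y2]; apply/eqP=> xy; subst y.
by move/setP: I => /(_ x); rewrite !inE x1 y2 (negbTE xv).
Qed.

Lemma dec_pseudo {T : finType} (e : rel T) v W1 W2 : Dec e v W1 W2 -> pseudo_cograph e.
Proof. by move=> [h1 [h2 h3]]; right; exists W1, W2, v; split=> //; split=> //; right. Qed.

Lemma decc_pseudo {T : finType} (e : rel T) v W1 W2 :
  symmetric e -> irreflexive e -> Dec (compl e) v W1 W2 -> pseudo_cograph e.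
Proof.
move=> es ei [[U I c1 c2] [[g1 g2] h3]]; right; exists W1, W2, v; split=> //.
split; first by rewrite /cographW -!(P4_compl _ es ei).
left=> x y xW yW; move: (h3 x y xW yW); rewrite /compl /= negb_and.
by rewrite (negbTE (inter_neq I xW yW)) /= negbK.
Qed.

Lemma pseudo_dec {T : finType} (e : rel T) :
  symmetric e -> irreflexive e -> pseudo_cograph e ->
  #|T| <= 2 \/ exists v W1 W2, Dec e v W1 W2 \/ Dec (compl e) v W1 W2.
Proof.
move=> es ei [h|[W1 [W2 [v [[U I c1 c2] [[g1 g2] h3]]]]]]; first by left.
right; exists v, W1, W2; case: h3 => h3.
  right; split=> //; split; first by rewrite /cographW !(P4_compl _ es ei).
  by move=> x y xW yW; rewrite /compl /= (h3 x y xW yW) andbF.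
by left.
Qed.

Lemma condB_swap {T : finType} (g g' : rel T) (v : T) (r : rel T) :
  (forall W, has_induced_P4 g W = has_induced_P4 g' W) -> condB g v r -> condB g' v r.
Proof.
move=> E [d [h1 [H0 H0C h3]]]; split=> //; split.
  by move=> H HC; rewrite /cographW -E; apply: h1.
by exists H0 => // H H' a b c; rewrite -E; apply: h3.
Qed.

Lemma condC_swap {T : finType} (g g' : rel T) (v : T) (r : rel T) :
  (forall W, has_induced_P4 g W = has_induced_P4 g' W) -> condC g v r -> condC g' v r.
Proof.
move=> E; rewrite /condC /= => [[d h]]; split=> //.
set A := [set _ in _ | _]; set B := [set _ in _ | _] in h.
suff -> : A = B by [].
by apply/setP=> H; rewrite /A /B !inE /cographW !E.
Qed.


Lemma cog_condB {T : finType} (g : rel T) (v : T) :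
  cographW g setT -> disconnected g [set~ v] -> condB g v g.
Proof.
move=> cg dis; split=> //; split.
  by move=> H _; apply: cog_mono cg; apply: subsetT.
have [H0 H0C] : exists H0, H0 \in components g [set~ v].
  by apply/card_gt0P; apply: ltnW.
exists H0 => // H H' _ _ _ P.
by move: cg; rewrite /cographW (P4_mono (subsetT _) P).
Qed.

Lemma cog_pseudo {T : finType} (e : rel T) :
  symmetric e -> irreflexive e -> cograph e -> pseudo_cograph e.
Proof.
move=> es ei cg.
case: (leqP #|T| 2) => T2; first by left.
have [v _] : exists v, v \in [set: T] by apply/card_gt0P; rewrite cardsT; apply: ltnW; apply: ltnW.
have c0 : 1 < #|[set~ v]| by rewrite cardsC1; move: T2; case: #|T| => [|[|[|k]]].
have [d|d] := @seinsche _ _ e [set~ v] es ei (leqnn _) c0 (cog_mono (subsetT _) cg).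
  by have [W1 [W2 D]] := G2 es ei (cog_condB cg d); apply: dec_pseudo D.
have cg' : cographW (compl e) setT by rewrite /cographW P4_compl.
have [W1 [W2 D]] := G2 (compl_sym es) (@compl_irr _ e) (cog_condB cg' d).
exact: decc_pseudo D.
Qed.

Unset Implicit Arguments.

Theorem mainTheorem12 (T : finType) (e : rel T)
  (e_sym : symmetric e) (e_irr : irreflexive e) :
  (pseudo_cograph e <->
     (cograph e \/ exists v : T, condB e v e \/ condB e v (compl e))) /\
  ((cograph e \/ exists v : T, condB e v e \/ condB e v (compl e)) <->
     (cograph e \/ exists v : T, condC e v e \/ condC e v (compl e))).
Proof.
have Ec : forall W, has_induced_P4 (compl e) W = has_induced_P4 e W.
  by move=> W; apply: P4_compl.
have Ec' : forall W, has_induced_P4 e W = has_induced_P4 (compl e) W.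
  by move=> W; rewrite Ec.
have ces := compl_sym e_sym; have cei := @compl_irr _ e.
have P12 : pseudo_cograph e ->
    (cograph e \/ exists v : T, condB e v e \/ condB e v (compl e)).
  move/(pseudo_dec e_sym e_irr) => [T2|[v [W1 [W2 [D|D]]]]]; first by left; apply: small_cog.
    by right; exists v; left; apply: G1 D.
  by right; exists v; right; apply: condB_swap Ec _; apply: G1 D.
have P21 : (cograph e \/ exists v : T, condB e v e \/ condB e v (compl e)) ->
    pseudo_cograph e.
  case=> [cg|[v [h|h]]]; first exact: cog_pseudo.
    by have [W1 [W2 D]] := G2 e_sym e_irr h; apply: dec_pseudo D.
  have [W1 [W2 D]] := G2 ces cei (condB_swap Ec' h).
  exact: decc_pseudo D.
split; first by split.
split.
  case=> [cg|[v [h|h]]]; first by left.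
    by have [c|c] := G4 e_sym e_irr h; [left | right; exists v; left].
  have [c|c] := G4 ces cei (condB_swap Ec' h).
    by left; move: c; rewrite /cograph /cographW Ec.
  by right; exists v; right; apply: condC_swap Ec c.
case=> [cg|[v [h|h]]]; first by left.
  by apply: P12; have [W1 [W2 D]] := G3 e_sym h; apply: dec_pseudo D.
apply: P12; have [W1 [W2 D]] := G3 ces (condC_swap Ec' h).
exact: decc_pseudo D.
Qed.
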